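(* Let $c:\mathbb{R}_+\to\mathbb{R}_+$ be twice continuously differentiable, strictly semi-convex and strictly increasing, but not of BPR-type. Then there is a nonatomic routing game with a single origin-destination pair, consisting of two parallel edges from the origin to the destination with cost functions $c(x)$ and $c(x)+t$ for some $t\in\mathbb{R}_+$, that does not have a demand-independent optimal toll (DIOT).
   Context: A function $c$ is of BPR-type if $c(x)=t_c+a_cx^{\beta}$ for all $x\ge0$, for some $t_c,a_c\in\mathbb{R}_+$ and $\beta>0$. Strictly semi-convex means that $x\mapsto x\,c(x)$ is strictly convex. In a nonatomic routing game with a single origin $o$, destination $d$ and demand $\mu\ge0$, a flow splits $\mu$ among the $o$–$d$ paths (here the two edges); an edge with load $x$ has cost $c_e(x)$. A Wardrop equilibrium is a flow where every used path has cost at most that of every other path; a system optimum minimizes the total cost $\sum_e x_ec_e(x_e)$. For a toll vector $\boldsymbol{\tau}\in\mathbb{R}^{\mathcal{E}}$ (entries may be negative), the tolled game has edge costs $c_e(x)+\tau_e$. $\boldsymbol{\tau}$ is a DIOT if for every demand $\mu\ge0$ every Wardrop equilibrium of the tolled game is a system optimum of the untolled game for that demand. *)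

(* Defs.v *)
From Stdlib Require Import Reals.
From Coquelicot Require Import Coquelicot.
Open Scope R_scope.

(* Power x^beta for x >= 0, beta > 0, with the convention 0^beta = 0
   (Stdlib's Rpower 0 beta = 1, so we patch the value at 0). *)
Definition rpow (x beta : R) : R :=
  if Rle_dec x 0 then 0 else Rpower x beta.

Definition has_deriv_Rplus (f f' : R -> R) : Prop :=
  forall x, 0 <= x ->
    filterlim (fun y => (f y - f x) / (y - x))
      (within (fun y => 0 <= y /\ y <> x) (locally x)) (locally (f' x)).

Definition continuous_Rplus (f : R -> R) : Prop :=
  forall x, 0 <= x -> filterlim f (within (fun y => 0 <= y) (locally x)) (locally (f x)).

Definition C2_Rplus (c : R -> R) : Prop :=
  exists c1 c2 : R -> R,
    has_deriv_Rplus c c1 /\ has_deriv_Rplus c1 c2 /\ continuous_Rplus c2.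

Definition maps_Rplus (c : R -> R) : Prop := forall x, 0 <= x -> 0 <= c x.

Definition strictly_increasing_Rplus (c : R -> R) : Prop :=
  forall x y, 0 <= x -> x < y -> c x < c y.

Definition strictly_convex_Rplus (f : R -> R) : Prop :=
  forall x y l, 0 <= x -> 0 <= y -> x <> y -> 0 < l < 1 ->
    f (l * x + (1 - l) * y) < l * f x + (1 - l) * f y.

Definition strictly_semiconvex (c : R -> R) : Prop :=
  strictly_convex_Rplus (fun x => x * c x).

Definition BPR_type (c : R -> R) : Prop :=
  exists tc ac beta, 0 <= tc /\ 0 <= ac /\ 0 < beta /\
    forall x, 0 <= x -> c x = tc + ac * rpow x beta.

(* Two-parallel-edge game, single o-d pair, edge costs c1, c2.
   A flow for demand mu is (x1, x2) with x1, x2 >= 0 and x1 + x2 = mu. *)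
Definition feasible (mu x1 x2 : R) : Prop := 0 <= x1 /\ 0 <= x2 /\ x1 + x2 = mu.

Definition wardrop (c1 c2 : R -> R) (mu x1 x2 : R) : Prop :=
  feasible mu x1 x2 /\
  (0 < x1 -> c1 x1 <= c2 x2) /\ (0 < x2 -> c2 x2 <= c1 x1).

Definition total_cost (c1 c2 : R -> R) (x1 x2 : R) : R := x1 * c1 x1 + x2 * c2 x2.

Definition system_optimum (c1 c2 : R -> R) (mu x1 x2 : R) : Prop :=
  feasible mu x1 x2 /\
  forall y1 y2, feasible mu y1 y2 -> total_cost c1 c2 x1 x2 <= total_cost c1 c2 y1 y2.

(* toll vector (tau1, tau2) in R^E (entries may be negative) is a DIOT *)
Definition DIOT (c1 c2 : R -> R) (tau1 tau2 : R) : Prop :=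
  forall mu, 0 <= mu -> forall x1 x2,
    wardrop (fun x => c1 x + tau1) (fun x => c2 x + tau2) mu x1 x2 ->
    system_optimum c1 c2 mu x1 x2.

(* Main.v *)
Require Import Defs.
From Stdlib Require Import Reals Lra Psatz Classical ZArith.
From Coquelicot Require Import Coquelicot.
Open Scope R_scope.

Definition dED (f : R -> R) (x l : R) := forall eta, 0 < eta -> exists delta, 0 < delta /\
  forall y, 0 <= y -> y <> x -> Rabs (y - x) < delta -> Rabs ((f y - f x) / (y - x) - l) < eta.

Lemma deriv_to_dED f f' x : has_deriv_Rplus f f' -> 0 <= x -> dED f x (f' x).
Proof.
  intros Hd Hx eta Heta. specialize (Hd x Hx).
  apply (proj1 (filterlim_locally _ _)) with (eps := mkposreal eta Heta) in Hd.
  destruct Hd as [e He]. exists e. split. apply cond_pos.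
  intros y Hy Hyx Hd. apply (He y Hd). split; auto.
Qed.

Lemma dED_cont f x l : dED f x l -> 0 <= x -> forall eta, 0 < eta -> exists delta, 0 < delta /\
  forall y, 0 <= y -> Rabs (y - x) < delta -> Rabs (f y - f x) < eta.
Proof.
  intros Hd Hx eta Heta.
  destruct (Hd 1 Rlt_0_1) as [d1 [Hd1 H1]].
  exists (Rmin d1 (eta / (Rabs l + 1))). split.
  { apply Rmin_pos; auto. apply Rdiv_lt_0_compat; auto. pose proof (Rabs_pos l); lra. }
  intros y Hy Hyx.
  destruct (Req_dec y x) as [->|Hne]. { replace (f x - f x) with 0 by ring. rewrite Rabs_R0; auto. }
  assert (Hq := H1 y Hy Hne (Rlt_le_trans _ _ _ Hyx (Rmin_l _ _))).
  assert (Hm := Rlt_le_trans _ _ _ Hyx (Rmin_r _ _)).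
  assert (Hyx0 : y - x <> 0) by lra.
  replace (f y - f x) with ((f y - f x) / (y - x) * (y - x)) by (field; auto).
  rewrite Rabs_mult.
  assert (Rabs ((f y - f x) / (y - x)) < Rabs l + 1).
  { pose proof (Rabs_triang_inv ((f y - f x) / (y - x)) l). lra. }
  assert (0 < Rabs l + 1) by (pose proof (Rabs_pos l); lra).
  apply Rmult_lt_compat_r with (r := Rabs l + 1) in Hm; auto.
  unfold Rdiv in Hm. rewrite Rmult_assoc, Rinv_l in Hm by lra.
  pose proof (Rabs_pos (y - x)). pose proof (Rabs_pos ((f y - f x) / (y - x))).
  nra.
Qed.

Lemma dED_h c x l : dED c x l -> 0 <= x -> dED (fun y => y * c y) x (c x + x * l).
Proof.
  intros Hd Hx eta Heta.
  destruct (dED_cont c x l Hd Hx (eta/2)) as [d1 [Hd1 H1]]; [lra|].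
  assert (Hx1 : 0 < x + 1) by lra.
  destruct (Hd (eta / (2 * (x + 1)))) as [d2 [Hd2 H2]].
  { apply Rdiv_lt_0_compat; lra. }
  exists (Rmin d1 d2). split. apply Rmin_pos; auto.
  intros y Hy Hne Hyx.
  assert (Hyx0 : y - x <> 0) by lra.
  replace ((y * c y - x * c x) / (y - x) - (c x + x * l)) with
    ((c y - c x) + x * ((c y - c x) / (y - x) - l)) by (field; auto).
  eapply Rle_lt_trans. apply Rabs_triang.
  rewrite Rabs_mult, (Rabs_pos_eq x Hx).
  specialize (H1 y Hy (Rlt_le_trans _ _ _ Hyx (Rmin_l _ _))).
  specialize (H2 y Hy Hne (Rlt_le_trans _ _ _ Hyx (Rmin_r _ _))).
  assert (x * Rabs ((c y - c x) / (y - x) - l) <= x * (eta / (2 * (x + 1)))).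
  { apply Rmult_le_compat_l; lra. }
  assert (x * (eta / (2 * (x + 1))) <= eta / 2).
  { unfold Rdiv. rewrite Rinv_mult. 
    assert (0 < / (x+1)) by (apply Rinv_0_lt_compat; lra).
    assert (x * / (x + 1) <= 1).
    { apply Rmult_le_reg_r with (x+1); auto. rewrite Rmult_assoc, Rinv_l by lra. lra. }
    assert (0 < eta * / 2) by lra. 
    replace (x * (eta * (/ 2 * / (x + 1)))) with ((x * / (x+1)) * (eta * / 2)) by ring. nra. }
  lra.
Qed.

Lemma dED_addlin f x l t : dED f x l -> dED (fun y => f y + t * y) x (l + t).
Proof.
  intros Hd eta Heta. destruct (Hd eta Heta) as [d [Hd0 H]]. exists d. split; auto.
  intros y Hy Hne Hyx. 
  replace ((f y + t * y - (f x + t * x)) / (y - x) - (l + t)) with ((f y - f x) / (y - x) - l).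
  apply H; auto. field. lra.
Qed.

Lemma dED_nonneg f x l : dED f x l -> 0 <= x ->
  (forall y, x < y -> f x < f y) -> 0 <= l.
Proof.
  intros Hd Hx Hinc. destruct (Rle_or_lt 0 l) as [|Hl]; auto. exfalso.
  destruct (Hd (-l)) as [d [Hd0 H]]; [lra|].
  specialize (H (x + d/2)). 
  assert (Hq : 0 < (f (x + d / 2) - f x) / (x + d / 2 - x)).
  { apply Rdiv_lt_0_compat. specialize (Hinc (x + d/2)). lra. lra. }
  assert (Rabs ((f (x + d / 2) - f x) / (x + d / 2 - x) - l) < - l).
  { apply H; try lra. rewrite Rabs_pos_eq; lra. }
  rewrite Rabs_pos_eq in H0 by lra. lra.
Qed.

Lemma dED_pt_lim f x l : dED f x l -> 0 < x -> derivable_pt_lim f x l.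
Proof.
  intros Hd Hx eps Heps. destruct (Hd eps Heps) as [d [Hd0 H]].
  exists (mkposreal (Rmin d x) (Rmin_pos _ _ Hd0 Hx)). simpl.
  intros h Hh Hhd.
  assert (Rabs h < d) by (eapply Rlt_le_trans; [exact Hhd| apply Rmin_l]).
  assert (Rabs h < x) by (eapply Rlt_le_trans; [exact Hhd| apply Rmin_r]).
  specialize (H (x + h)). replace (x + h - x) with h in H by ring. apply H; auto.
  apply Rabs_def2 in H1. lra. lra.
Qed.

Lemma Rmax0_lip x y : Rabs (Rmax 0 y - Rmax 0 x) <= Rabs (y - x).
Proof.
  unfold Rmax. destruct (Rle_dec 0 y), (Rle_dec 0 x);
  unfold Rabs; repeat destruct (Rcase_abs _); lra.
Qed.

Lemma cont_ext f f1 : (forall x, 0 <= x -> dED f x (f1 x)) ->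
  continuity (fun x => f (Rmax 0 x)).
Proof.
  intros Hd x. apply continuity_pt_filterlim. apply filterlim_locally.
  intros eps.
  assert (H0 : 0 <= Rmax 0 x) by apply Rmax_l.
  destruct (dED_cont f _ _ (Hd _ H0) H0 eps (cond_pos eps)) as [d [Hd0 H]].
  exists (mkposreal d Hd0). intros y Hy. change (Rabs (f (Rmax 0 y) - f (Rmax 0 x)) < eps).
  apply H. apply Rmax_l. eapply Rle_lt_trans. apply Rmax0_lip. exact Hy.
Qed.

Lemma IVT_c f f1 : (forall x, 0 <= x -> dED f x (f1 x)) ->
  forall w v, 0 <= w -> f 0 <= v <= f w -> exists z, 0 <= z <= w /\ f z = v.
Proof.
  intros Hd w v Hw Hv.
  destruct (IVT_gen (fun x => f (Rmax 0 x)) 0 w v (cont_ext f f1 Hd)) as [z [Hz Hfz]].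
  { rewrite (Rmax_left 0 0) by lra. rewrite (Rmax_right 0 w) by lra.
    split. eapply Rle_trans. apply Rmin_l. lra. eapply Rle_trans. 2: apply Rmax_r. lra. }
  rewrite Rmin_left, Rmax_right in Hz by lra.
  exists z. split; auto. rewrite Rmax_right in Hfz by lra. auto.
Qed.

Lemma slope_lt h : strictly_convex_Rplus h -> forall x w z, 0 <= x -> x < w -> w < z ->
  (h w - h x) / (w - x) < (h z - h x) / (z - x).
Proof.
  intros Hc x w z Hx Hxw Hwz.
  set (lam := (z - w) / (z - x)).
  assert (Hl : 0 < lam < 1).
  { unfold lam. split. apply Rdiv_lt_0_compat; lra.
    apply Rmult_lt_reg_r with (z - x). lra. unfold Rdiv. rewrite Rmult_assoc, Rinv_l; lra. }
  assert (Hw : lam * x + (1 - lam) * z = w) by (unfold lam; field; lra).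
  pose proof (Hc x z lam Hx ltac:(lra) ltac:(lra) Hl) as H. rewrite Hw in H.
  assert (H1 : 1 - lam = (w - x) / (z - x)) by (unfold lam; field; lra).
  assert (h w - h x < (w - x) / (z - x) * (h z - h x)) by (rewrite <- H1; lra).
  apply Rmult_lt_reg_r with (w - x). lra.
  replace ((h w - h x) / (w - x) * (w - x)) with (h w - h x) by (field; lra).
  replace ((h z - h x) / (z - x) * (w - x)) with ((w - x) / (z - x) * (h z - h x)) by (field; lra).
  auto.
Qed.

Lemma slope_lt2 h : strictly_convex_Rplus h -> forall x w z, 0 <= x -> x < w -> w < z ->
  (h z - h x) / (z - x) < (h z - h w) / (z - w).
Proof.
  intros Hc x w z Hx Hxw Hwz.
  set (lam := (z - w) / (z - x)).
  assert (Hl : 0 < lam < 1).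
  { unfold lam. split. apply Rdiv_lt_0_compat; lra.
    apply Rmult_lt_reg_r with (z - x). lra. unfold Rdiv. rewrite Rmult_assoc, Rinv_l; lra. }
  assert (Hw : lam * x + (1 - lam) * z = w) by (unfold lam; field; lra).
  pose proof (Hc x z lam Hx ltac:(lra) ltac:(lra) Hl) as H. rewrite Hw in H.
  assert (lam * (h z - h x) < h z - h w) by lra.
  apply Rmult_lt_reg_r with (z - w). lra.
  replace ((h z - h w) / (z - w) * (z - w)) with (h z - h w) by (field; lra).
  replace ((h z - h x) / (z - x) * (z - w)) with (lam * (h z - h x)) by (unfold lam; field; lra).
  auto.
Qed.

Lemma m_lt h m : strictly_convex_Rplus h -> (forall x, 0 <= x -> dED h x (m x)) ->
  forall x y, 0 <= x -> x < y -> m x < m y.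
Proof.
  intros Hc Hd x y Hx Hxy. set (z := (x + y) / 2).
  assert (Hxz : x < z) by (unfold z; lra). assert (Hzy : z < y) by (unfold z; lra).
  assert (A : m x <= (h z - h x) / (z - x)).
  { destruct (Rle_or_lt (m x) ((h z - h x) / (z - x))) as [|Hlt]; auto. exfalso.
    destruct (Hd x Hx (m x - (h z - h x) / (z - x))) as [d [Hd0 H]]; [lra|].
    set (w := x + Rmin d (z - x) / 2).
    assert (0 < Rmin d (z - x)) by (apply Rmin_pos; lra).
    pose proof (Rmin_l d (z - x)). pose proof (Rmin_r d (z - x)).
    assert (Hw1 : x < w) by (unfold w; lra). assert (Hw2 : w < z) by (unfold w; lra).
    specialize (H w ltac:(lra) ltac:(lra)).
    assert (Rabs (w - x) < d) by (rewrite Rabs_pos_eq; unfold w; lra).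
    specialize (H H3). apply Rabs_def2 in H.
    pose proof (slope_lt h Hc x w z Hx Hw1 Hw2). lra. }
  assert (B : (h y - h z) / (y - z) <= m y).
  { destruct (Rle_or_lt ((h y - h z) / (y - z)) (m y)) as [|Hlt]; auto. exfalso.
    destruct (Hd y ltac:(lra) ((h y - h z) / (y - z) - m y)) as [d [Hd0 H]]; [lra|].
    set (w := y - Rmin d (y - z) / 2).
    assert (0 < Rmin d (y - z)) by (apply Rmin_pos; lra).
    pose proof (Rmin_l d (y - z)). pose proof (Rmin_r d (y - z)).
    assert (Hw1 : z < w) by (unfold w; lra). assert (Hw2 : w < y) by (unfold w; lra).
    specialize (H w ltac:(lra) ltac:(lra)).
    assert (Rabs (w - y) < d) by (rewrite Rabs_left; unfold w; lra).
    specialize (H H3). apply Rabs_def2 in H.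
    replace ((h w - h y) / (w - y)) with ((h y - h w) / (y - w)) in H by (field; lra).
    pose proof (slope_lt2 h Hc z w y ltac:(lra) Hw1 Hw2). lra. }
  pose proof (slope_lt h Hc x z y Hx Hxz Hzy).
  pose proof (slope_lt2 h Hc x z y Hx Hxz Hzy). lra.
Qed.

Lemma foc H1 H2 M1 M2 x1 x2 : 0 < x1 -> 0 <= x2 -> dED H1 x1 M1 -> dED H2 x2 M2 ->
  (forall e, 0 < e <= x1 -> H1 x1 + H2 x2 <= H1 (x1 - e) + H2 (x2 + e)) -> M1 <= M2.
Proof.
  intros Hx1 Hx2 D1 D2 Hopt.
  destruct (Rle_or_lt M1 M2) as [|Hlt]; auto. exfalso.
  set (eta := (M1 - M2) / 2).
  destruct (D1 eta ltac:(unfold eta; lra)) as [d1 [Hd1 E1]].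
  destruct (D2 eta ltac:(unfold eta; lra)) as [d2 [Hd2 E2]].
  set (e := Rmin x1 (Rmin d1 d2) / 2).
  assert (0 < Rmin d1 d2) by (apply Rmin_pos; lra).
  assert (0 < Rmin x1 (Rmin d1 d2)) by (apply Rmin_pos; lra).
  pose proof (Rmin_l x1 (Rmin d1 d2)). pose proof (Rmin_r x1 (Rmin d1 d2)).
  pose proof (Rmin_l d1 d2). pose proof (Rmin_r d1 d2).
  assert (He : 0 < e) by (unfold e; lra).
  specialize (Hopt e ltac:(unfold e; lra)).
  specialize (E1 (x1 - e) ltac:(unfold e; lra) ltac:(lra)).
  specialize (E2 (x2 + e) ltac:(lra) ltac:(lra)).
  replace (x1 - e - x1) with (- e) in E1 by ring.
  replace (x2 + e - x2) with e in E2 by ring.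
  rewrite Rabs_Ropp, Rabs_pos_eq in E1 by lra.
  rewrite Rabs_pos_eq in E2 by lra.
  specialize (E1 ltac:(unfold e; lra)). specialize (E2 ltac:(unfold e; lra)).
  apply Rabs_def2 in E1. apply Rabs_def2 in E2.
  replace ((H1 (x1 - e) - H1 x1) / - e) with ((H1 x1 - H1 (x1 - e)) / e) in E1 by (field; lra).
  assert ((H1 x1 - H1 (x1 - e)) / e <= (H2 (x2 + e) - H2 x2) / e).
  { unfold Rdiv. apply Rmult_le_compat_r. left. apply Rinv_0_lt_compat. lra. lra. }
  unfold eta in *. lra.
Qed.

Definition mc (c c1 : R -> R) x := c x + x * c1 x.

Lemma dED_m c c1 : (forall x, 0 <= x -> dED c x (c1 x)) ->
  forall x, 0 <= x -> dED (fun y => y * c y) x (mc c c1 x).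
Proof. intros Hd x Hx. apply dED_h; auto. Qed.

Lemma m_incr c c1 : (forall x, 0 <= x -> dED c x (c1 x)) -> strictly_semiconvex c ->
  forall x y, 0 <= x -> x < y -> mc c c1 x < mc c c1 y.
Proof. intros Hd Hc. apply (m_lt (fun y => y * c y)); auto. apply dED_m; auto. Qed.

Lemma c_inj c : strictly_increasing_Rplus c -> forall x y, 0 <= x -> 0 <= y -> c x = c y -> x = y.
Proof.
  intros Hi x y Hx Hy E. destruct (Rtotal_order x y) as [H|[H|H]]; auto.
  specialize (Hi x y Hx H). lra. specialize (Hi y x Hy H). lra.
Qed.

Lemma foc1 c c1 t mu x1 x2 : (forall x, 0 <= x -> dED c x (c1 x)) ->
  system_optimum c (fun x => c x + t) mu x1 x2 -> 0 < x1 -> mc c c1 x1 <= mc c c1 x2 + t.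
Proof.
  intros Hd [[F1 [F2 F3]] Hopt] Hx1.
  apply (foc (fun y => y * c y) (fun y => y * c y + t * y) _ _ x1 x2).
  - exact Hx1.
  - exact F2.
  - apply dED_m; auto; lra.
  - apply dED_addlin. apply dED_m; auto.
  - intros e He. specialize (Hopt (x1 - e) (x2 + e)). unfold total_cost in Hopt.
  assert (feasible mu (x1 - e) (x2 + e)) by (split; [lra|split; lra]).
  specialize (Hopt H). lra.
Qed.

Lemma foc2 c c1 t mu x1 x2 : (forall x, 0 <= x -> dED c x (c1 x)) ->
  system_optimum c (fun x => c x + t) mu x1 x2 -> 0 < x2 -> mc c c1 x2 + t <= mc c c1 x1.
Proof.
  intros Hd [[F1 [F2 F3]] Hopt] Hx2.
  apply (foc (fun y => y * c y + t * y) (fun y => y * c y) _ _ x2 x1).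
  - exact Hx2.
  - exact F1.
  - apply dED_addlin. apply dED_m; auto; lra.
  - apply dED_m; auto.
  - intros e He. specialize (Hopt (x1 + e) (x2 - e)). unfold total_cost in Hopt.
  assert (feasible mu (x1 + e) (x2 - e)) by (split; [lra|split; lra]).
  specialize (Hopt H). lra.
Qed.

Lemma phi_cont c c1 a d : (forall x, 0 <= x -> dED c x (c1 x)) ->
  continuity (fun x => c (Rmax 0 x) - c (Rmax 0 (a - x)) - d).
Proof.
  intros Hd. assert (HF := cont_ext c c1 Hd).
  assert (Hg : continuity (fun x => c (Rmax 0 (a - x)))).
  { intro x. apply (continuity_pt_comp (fun x => a - x) (fun x => c (Rmax 0 x))).
    reg. apply HF. }
  intro x. apply continuity_pt_minus. apply continuity_pt_minus. apply HF. apply Hg.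
  apply continuity_pt_const. unfold constant. reflexivity.
Qed.

Lemma claimA c c1 a tau1 tau2 : (forall x, 0 <= x -> dED c x (c1 x)) -> strictly_semiconvex c ->
  0 < a -> DIOT c (fun x => c x + (mc c c1 a - mc c c1 0)) tau1 tau2 ->
  tau2 + (mc c c1 a - mc c c1 0) - tau1 = c a - c 0.
Proof.
  intros Hd Hc Ha HD.
  set (t := mc c c1 a - mc c c1 0) in *.
  pose proof (m_incr c c1 Hd Hc) as Hm.
  assert (Hm0a := Hm 0 a ltac:(lra) Ha).
  set (d := tau2 + t - tau1).
  destruct (Rtotal_order d (c a - c 0)) as [Hlt|[Heq|Hgt]]; auto; exfalso.
  - destruct (Rle_or_lt (c a + d) (c 0)) as [Hle|Hlt2].
    + assert (W : wardrop (fun x => c x + tau1) (fun x => c x + t + tau2) a 0 a).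
      { split. split; [lra|split; lra]. split; intros; unfold d in *; lra. }
      specialize (HD a ltac:(lra) 0 a W).
      pose proof (foc2 c c1 t a 0 a Hd HD Ha). unfold t in *. lra.
    + set (phi := fun x => c (Rmax 0 x) - c (Rmax 0 (a - x)) - d).
      assert (Hphi : continuity phi) by (apply phi_cont with c1; auto).
      assert (P0 : phi 0 = c 0 - c a - d).
      { unfold phi. rewrite Rmax_left by lra. rewrite Rmax_right by lra. repeat f_equal; try ring. }
      assert (Pa : phi a = c a - c 0 - d).
      { unfold phi. rewrite (Rmax_right 0 a) by lra. rewrite Rmax_left by lra. repeat f_equal; try ring. }
      destruct (IVT_gen phi 0 a 0 Hphi) as [x1 [Hx1 Hp]].
      { rewrite P0, Pa, Rmin_left, Rmax_right by lra. lra. }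
      rewrite Rmin_left, Rmax_right in Hx1 by lra.
      assert (x1 <> 0) by (intro; subst; lra).
      assert (x1 <> a) by (intro; subst; lra).
      unfold phi in Hp. rewrite (Rmax_right 0 x1), (Rmax_right 0 (a - x1)) in Hp by lra.
      assert (W : wardrop (fun x => c x + tau1) (fun x => c x + t + tau2) a x1 (a - x1)).
      { split. split; [lra|split; lra]. split; intros; unfold d in *; lra. }
      specialize (HD a ltac:(lra) x1 (a - x1) W).
      pose proof (foc1 c c1 t a x1 (a - x1) Hd HD ltac:(lra)).
      pose proof (foc2 c c1 t a x1 (a - x1) Hd HD ltac:(lra)).
      pose proof (Hm 0 (a - x1) ltac:(lra) ltac:(lra)).
      pose proof (Hm x1 a ltac:(lra) ltac:(lra)).
      unfold t in *. lra.
  - destruct (dED_cont c a (c1 a) (Hd a ltac:(lra)) ltac:(lra) (d - (c a - c 0))) as [dl [Hdl Hcont]]; [lra|].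
    set (x1 := a + dl / 2).
    specialize (Hcont x1 ltac:(unfold x1; lra)).
    rewrite Rabs_pos_eq in Hcont by (unfold x1; lra).
    specialize (Hcont ltac:(unfold x1; lra)). apply Rabs_def2 in Hcont.
    assert (W : wardrop (fun x => c x + tau1) (fun x => c x + t + tau2) x1 x1 0).
    { split. split; [unfold x1; lra|split; lra]. split; intros; unfold d in *; lra. }
    specialize (HD x1 ltac:(unfold x1; lra) x1 0 W).
    pose proof (foc1 c c1 t x1 x1 0 Hd HD ltac:(unfold x1; lra)).
    pose proof (Hm a x1 ltac:(lra) ltac:(unfold x1; lra)).
    unfold t in *. lra.
Qed.

Lemma Pprop c c1 : (forall x, 0 <= x -> dED c x (c1 x)) -> strictly_semiconvex c ->
  strictly_increasing_Rplus c ->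
  (forall t, 0 <= t -> exists tau1 tau2, DIOT c (fun x => c x + t) tau1 tau2) ->
  forall a x2 x1, 0 <= a -> 0 <= x2 -> 0 <= x1 ->
  c x1 - c 0 = (c x2 - c 0) + (c a - c 0) -> x1 * c1 x1 = x2 * c1 x2 + a * c1 a.
Proof.
  intros Hd Hc Hi Hall a x2 x1 Ha Hx2 Hx1 E.
  destruct (Req_dec a 0) as [->|Ha0].
  { assert (x1 = x2) by (apply (c_inj c Hi); auto; lra). subst. ring. }
  destruct (Req_dec x2 0) as [->|Hx20].
  { assert (x1 = a) by (apply (c_inj c Hi); auto; lra). subst. ring. }
  assert (Hm := m_incr c c1 Hd Hc).
  assert (Hma := Hm 0 a ltac:(lra) ltac:(lra)).
  destruct (Hall (mc c c1 a - mc c c1 0) ltac:(lra)) as [tau1 [tau2 HD]].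
  pose proof (claimA c c1 a tau1 tau2 Hd Hc ltac:(lra) HD) as HA.
  set (t := mc c c1 a - mc c c1 0) in *.
  assert (Hca := Hi 0 a ltac:(lra) ltac:(lra)).
  assert (Hcx2 := Hi 0 x2 ltac:(lra) ltac:(lra)).
  assert (Hx1p : 0 < x1).
  { destruct (Req_dec x1 0) as [->|]; lra. }
  assert (W : wardrop (fun x => c x + tau1) (fun x => c x + t + tau2) (x1 + x2) x1 x2).
  { split. split; [lra|split; lra]. split; intros; lra. }
  specialize (HD (x1 + x2) ltac:(lra) x1 x2 W).
  pose proof (foc1 c c1 t _ x1 x2 Hd HD Hx1p).
  pose proof (foc2 c c1 t _ x1 x2 Hd HD ltac:(lra)).
  unfold t, mc in *. lra.
Qed.
Lemma floor_nat r : 0 <= r -> exists j : nat, INR j <= r < INR j + 1.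
Proof.
  intros Hr. destruct (archimed r) as [H1 H2].
  assert (Hz : (0 < up r)%Z) by (apply lt_0_IZR; lra).
  exists (Z.to_nat (up r - 1)).
  rewrite INR_IZR_INZ, Z2Nat.id by lia. rewrite minus_IZR. simpl. lra.
Qed.

Lemma lim_ge A B C : 0 <= C -> (forall n : nat, (0 < n)%nat -> B - C / INR n <= A) -> B <= A.
Proof.
  intros HC H. destruct (Rle_or_lt B A) as [|Hlt]; auto. exfalso.
  destruct (archimed_cor1 ((B - A) / (C + 1))) as [N [HN HN0]].
  { apply Rdiv_lt_0_compat; lra. }
  specialize (H N HN0). assert (0 < INR N) by (apply lt_0_INR; auto).
  assert (C / INR N <= (C + 1) * / INR N).
  { unfold Rdiv. apply Rmult_le_compat_r. left; apply Rinv_0_lt_compat; auto. lra. }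
  assert ((C + 1) * / INR N < B - A).
  { apply Rmult_lt_reg_l with (/ (C+1)). apply Rinv_0_lt_compat; lra.
    rewrite <- Rmult_assoc, Rinv_l, Rmult_1_l by lra. 
    replace (/ (C + 1) * (B - A)) with ((B - A) / (C + 1)) by (field; lra). auto. }
  lra.
Qed.

Lemma div_nn a b : 0 <= a -> 0 < b -> 0 <= a / b.
Proof. intros. unfold Rdiv. apply Rle_mult_inv_pos; auto. Qed.

Section Cauchy.
Variables u g : R -> R.
Hypothesis Hu0 : u 0 = 0.
Hypothesis Hg0 : g 0 = 0.
Hypothesis Hunn : forall x, 0 <= x -> 0 <= u x.
Hypothesis Hupos : forall x, 0 < x -> 0 < u x.
Hypothesis Huinj : forall x y, 0 <= x -> 0 <= y -> u x = u y -> x = y.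
Hypothesis Hgnn : forall x, 0 <= x -> 0 <= g x.
Hypothesis Hivt : forall w v, 0 <= w -> 0 <= v <= u w -> exists z, 0 <= z <= w /\ u z = v.
Hypothesis HP : forall a x2 x1, 0 <= a -> 0 <= x2 -> 0 <= x1 -> u x1 = u x2 + u a -> g x1 = g x2 + g a.

Lemma Lmult : forall (j : nat) y w, 0 <= y -> 0 <= w -> INR j * u y <= u w ->
  exists z, 0 <= z <= w /\ u z = INR j * u y /\ g z = INR j * g y.
Proof.
  induction j as [|j IH]; intros y w Hy Hw Hj.
  - exists 0. simpl. rewrite Hu0, Hg0. split; [lra|split; ring].
  - rewrite S_INR in *. assert (Huy := Hunn y Hy).
    destruct (IH y w Hy Hw ltac:(nra)) as [z [Hz [Huz Hgz]]].
    destruct (Hivt w ((INR j + 1) * u y) Hw) as [z' [Hz' Huz']].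
    { split; auto. pose proof (pos_INR j). nra. }
    exists z'. split; auto. split; auto.
    rewrite (HP y z z') by (auto; lra). rewrite Hgz. ring.
Qed.

Lemma Ldiv : forall x (n : nat), 0 <= x -> (0 < n)%nat ->
  exists y, 0 <= y /\ u y = u x / INR n /\ g x = INR n * g y.
Proof.
  intros x n Hx Hn. assert (Hn' : 0 < INR n) by (apply lt_0_INR; auto).
  assert (Hux := Hunn x Hx).
  assert (1 <= INR n) by (apply (le_INR 1); lia).
  destruct (Hivt x (u x / INR n) Hx) as [y [Hy Huy]].
  { split. apply div_nn; auto.
    apply Rmult_le_reg_r with (INR n); auto. unfold Rdiv. rewrite Rmult_assoc, Rinv_l by lra. nra. }
  exists y. split. lra. split; auto.
  destruct (Lmult n y x ltac:(lra) Hx) as [z [Hz [Huz Hgz]]].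
  { rewrite Huy. right. field. lra. }
  assert (z = x). { apply Huinj; try lra. rewrite Huz, Huy. field. lra. }
  subst. auto.
Qed.

Lemma Llower : forall x w (n : nat), 0 < x -> 0 <= w -> (0 < n)%nat ->
  u w / u x * g x - g x / INR n <= g w.
Proof.
  intros x w n Hx Hw Hn. assert (Hn' : 0 < INR n) by (apply lt_0_INR; auto).
  assert (Hux := Hupos x Hx). assert (Huw := Hunn w Hw). assert (Hgx := Hgnn x ltac:(lra)).
  destruct (Ldiv x n ltac:(lra) Hn) as [y [Hy [Huy Hgy]]].
  destruct (floor_nat (INR n * u w / u x)) as [j [Hj1 Hj2]].
  { apply div_nn; nra. }
  assert (Hjle : INR j * u y <= u w).
  { rewrite Huy. apply Rmult_le_compat_r with (r := u x / INR n) in Hj1.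
    2: { apply div_nn; lra. }
    replace (INR n * u w / u x * (u x / INR n)) with (u w) in Hj1 by (field; lra).
    replace (INR j * (u x / INR n)) with (INR j * u x / INR n) by (field; lra).
    unfold Rdiv in *. lra. }
  destruct (Lmult j y w Hy Hw Hjle) as [z [Hz [Huz Hgz]]].
  assert (Huz0 := Hunn z ltac:(lra)).
  destruct (Hivt w (u w - u z) Hw) as [r [Hr Hur]].
  { split; lra. }
  assert (Hgw : g w = g z + g r) by (apply HP; try lra).
  assert (Hgr := Hgnn r ltac:(lra)).
  assert (Hgy' : g y = g x / INR n) by (rewrite Hgy; field; lra).
  assert (Hjr : INR n * u w / u x - 1 < INR j) by lra.
  assert (g z = INR j / INR n * g x) by (rewrite Hgz, Hgy'; field; lra).
  assert (u w / u x - / INR n <= INR j / INR n).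
  { apply Rmult_le_reg_r with (INR n); auto.
    replace ((u w / u x - / INR n) * INR n) with (INR n * u w / u x - 1) by (field; lra).
    replace (INR j / INR n * INR n) with (INR j) by (field; lra). lra. }
  replace (u w / u x * g x - g x / INR n) with ((u w / u x - / INR n) * g x) by (field; lra).
  nra.
Qed.

Lemma Lratio : forall x w, 0 < x -> 0 < w -> g w * u x = g x * u w.
Proof.
  intros x w Hx Hw.
  assert (A : u w / u x * g x <= g w).
  { apply (lim_ge _ _ (g x)). apply Hgnn; lra. intros n Hn. apply Llower; auto; lra. }
  assert (B : u x / u w * g w <= g x).
  { apply (lim_ge _ _ (g w)). apply Hgnn; lra. intros n Hn. apply Llower; auto; lra. }
  assert (Hux := Hupos x Hx). assert (Huw := Hupos w Hw).
  apply Rmult_le_compat_r with (r := u x) in A; [|lra].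
  apply Rmult_le_compat_r with (r := u w) in B; [|lra].
  replace (u w / u x * g x * u x) with (g x * u w) in A by (field; lra).
  replace (u x / u w * g w * u w) with (g w * u x) in B by (field; lra).
  lra.
Qed.

End Cauchy.

Lemma Rpower_1_base z : Rpower 1 z = 1.
Proof. unfold Rpower. rewrite ln_1, Rmult_0_r, exp_0. reflexivity. Qed.

Lemma ode c c1 k : (forall x, 0 <= x -> dED c x (c1 x)) ->
  (forall x, 0 < x -> x * c1 x = k * (c x - c 0)) ->
  forall x, 0 < x -> c x - c 0 = (c 1 - c 0) * Rpower x k.
Proof.
  intros Hd Hg.
  set (F := fun y => (c y - c 0) * Rpower y (- k)).
  assert (HF : forall y, 0 < y -> derivable_pt_lim F y 0).
  { intros y Hy.
    assert (D1 : derivable_pt_lim (fun y => c y - c 0) y (c1 y - 0)).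
    { apply (derivable_pt_lim_minus c (fun _ => c 0)).
      apply dED_pt_lim; [apply Hd; lra|exact Hy]. apply derivable_pt_lim_const. }
    assert (D2 := derivable_pt_lim_power y (- k) Hy).
    assert (D := derivable_pt_lim_mult _ _ _ _ _ D1 D2).
    assert (E : (c1 y - 0) * Rpower y (- k) + (c y - c 0) * (- k * Rpower y (- k - 1)) = 0).
    { replace (Rpower y (- k)) with (Rpower y (- k - 1) * y).
      2: { rewrite <- (Rpower_1 y) at 2 by auto. rewrite <- Rpower_plus. f_equal. ring. }
      replace ((c1 y - 0) * (Rpower y (- k - 1) * y) + (c y - c 0) * (- k * Rpower y (- k - 1)))
        with (Rpower y (- k - 1) * (y * c1 y - k * (c y - c 0))) by ring.
      rewrite Hg by auto. ring. }
    cbv beta in D. rewrite E in D. exact D. }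
  assert (Hc : forall x, 0 < x -> F x = F 1).
  { intros x Hx. destruct (Rtotal_order x 1) as [H|[H|H]].
    - destruct (MVT_cor2 F (fun _ => 0) x 1 H) as [z [Hz _]].
      { intros z Hz. apply HF. lra. } lra.
    - subst; auto.
    - destruct (MVT_cor2 F (fun _ => 0) 1 x H) as [z [Hz _]].
      { intros z Hz. apply HF. lra. } lra. }
  intros x Hx. specialize (Hc x Hx). unfold F in Hc. rewrite Rpower_1_base, Rmult_1_r in Hc.
  rewrite <- Hc. rewrite Rmult_assoc, <- Rpower_plus.
  replace (- k + k) with 0 by ring. rewrite Rpower_O by auto. ring.
Qed.

Theorem theorem5 (c : R -> R) :
  maps_Rplus c -> C2_Rplus c -> strictly_semiconvex c ->
  strictly_increasing_Rplus c -> ~ BPR_type c ->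
  exists t : R, 0 <= t /\
    ~ (exists tau1 tau2 : R, DIOT c (fun x => c x + t) tau1 tau2).
Proof.
  intros Hmap [c1 [c2 [Hd1 _]]] Hc Hi HnB.
  apply NNPP. intro Hn. apply HnB.
  assert (Hall : forall t, 0 <= t -> exists tau1 tau2, DIOT c (fun x => c x + t) tau1 tau2).
  { intros t Ht. apply NNPP. intro H. apply Hn. exists t. split; auto. }
  assert (Hd : forall x, 0 <= x -> dED c x (c1 x)) by (intros; apply deriv_to_dED; auto).
  assert (Hunn : forall x, 0 <= x -> 0 <= c x - c 0).
  { intros x Hx. destruct (Req_dec x 0) as [->|]. lra. specialize (Hi 0 x ltac:(lra) ltac:(lra)). lra. }
  assert (Hupos : forall x, 0 < x -> 0 < c x - c 0).
  { intros x Hx. specialize (Hi 0 x ltac:(lra) Hx). lra. }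
  assert (Hgnn : forall x, 0 <= x -> 0 <= x * c1 x).
  { intros x Hx. apply Rmult_le_pos; auto. apply (dED_nonneg c x); auto.
    all: try (intros y Hy; apply Hi; auto). }
  assert (Hrat := Lratio (fun x => c x - c 0) (fun x => x * c1 x)
    ltac:(simpl; ring) ltac:(simpl; ring) Hunn Hupos).
  assert (Hrat' : forall x w, 0 < x -> 0 < w -> w * c1 w * (c x - c 0) = x * c1 x * (c w - c 0)).
  { apply Hrat.
    - intros x y Hx Hy E. apply (c_inj c Hi); auto. lra.
    - auto.
    - intros w v Hw Hv. destruct (IVT_c c c1 Hd w (c 0 + v) Hw) as [z [Hz Hcz]]. lra.
      exists z. split; auto. lra.
    - intros a x2 x1 Ha Hx2 Hx1 E. apply (Pprop c c1 Hd Hc Hi Hall); auto. }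
  set (k := 1 * c1 1 / (c 1 - c 0)).
  assert (Hu1 := Hupos 1 ltac:(lra)).
  assert (Hgk : forall x, 0 < x -> x * c1 x = k * (c x - c 0)).
  { intros x Hx. specialize (Hrat' 1 x ltac:(lra) Hx). unfold k. field_simplify_eq; [|lra]. lra. }
  assert (Hk0 : 0 <= k) by (unfold k; apply div_nn; auto; apply Hgnn; lra).
  assert (Hk : 0 < k).
  { destruct Hk0 as [|Hk0]; auto. exfalso.
    destruct (MVT_cor2 c c1 (1/2) 1 ltac:(lra)) as [z [Hz Hz2]].
    { intros z Hz. apply dED_pt_lim; [apply Hd; lra|lra]. }
    specialize (Hgk z ltac:(lra)). rewrite <- Hk0 in Hgk.
    assert (c1 z = 0).
    { apply Rmult_eq_reg_l with z. rewrite Rmult_0_r, Hgk; ring. lra. }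
    specialize (Hi (1/2) 1 ltac:(lra) ltac:(lra)). rewrite H in Hz. lra. }
  exists (c 0), (c 1 - c 0), k. split; [apply Hmap; lra|]. split; [lra|]. split; [auto|].
  intros x Hx. unfold rpow. destruct (Rle_dec x 0).
  - assert (x = 0) by lra. subst. ring.
  - rewrite <- (ode c c1 k Hd Hgk x) by lra. ring.
Qed.
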